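(* Let $N$ be a finite set with $|N|\ge2$, and assume that $\langle o,\eta\rangle\le u$, with $o\in\mathbb{R}^{\Upsilon}$ and $u\in\mathbb{R}$, is valid for all $\eta\in P_N$. Then $u\ge 0$. Moreover: (i) $u=0$ if and only if the face of $P_N$ defined by this inequality contains $\eta_{G_\emptyset}$ (the zero vector), where $G_\emptyset$ is the empty graph over $N$; (ii) if $u=0$ then $o(a|B)\le 0$ for every $(a|B)\in\Upsilon$; (iii) the facet-defining inequalities for $P_N$ that are tight at the empty graph are exactly (up to positive scaling) the inequalities $-\eta(a|B)\le 0$, $(a|B)\in\Upsilon$; (iv) if the inequality is facet-defining for $P_N$ and $u>0$, then $o(a|B)\ge o(a|A)\ge 0$ whenever $a\in N$ and $\emptyset\neq A\subseteq B\subseteq N\setminus\{a\}$.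
   Context: $\mathrm{DAG}(N)$ is the set of acyclic directed graphs over $N$; $\mathrm{pa}_G(a)$ is the parent set of $a$ in $G$; the empty graph has no arrows. $\Upsilon=\{(a|B): a\in N,\ \emptyset\neq B\subseteq N\setminus\{a\}\}$; $\eta_G\in\mathbb{R}^{\Upsilon}$ has $\eta_G(a|B)=1$ if $B=\mathrm{pa}_G(a)$, else $0$; $P_N=\mathrm{conv}\{\eta_G:G\in\mathrm{DAG}(N)\}$ is the family-variable polytope, of dimension $|\Upsilon|$. *)

(* Defs.v *)
From HB Require Import structures.
From mathcomp Require Import all_boot all_order all_algebra.
Set Implicit Arguments. Unset Strict Implicit. Unset Printing Implicit Defensive.
Import Order.TTheory GRing.Theory Num.Theory.
Local Open Scope ring_scope.

Definition Ups_pred (N : finType) : pred (N * {set N}) :=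
  fun p => (p.2 != set0) && (p.1 \notin p.2).
Definition Ups (N : finType) := {p : N * {set N} | Ups_pred p}.

(* A directed graph over N is given by its parent sets pa a. The arc
   x -> y is present iff x \in pa y. *)
Definition arc (N : finType) (pa : {ffun N -> {set N}}) : rel N :=
  fun x y => x \in pa y.
Definition is_dag (N : finType) (pa : {ffun N -> {set N}}) : bool :=
  [forall x, forall y, arc pa x y ==> ~~ connect (arc pa) y x].
Definition dag (N : finType) := {pa : {ffun N -> {set N}} | is_dag pa}.

Definition empty_pa (N : finType) : {ffun N -> {set N}} := [ffun _ => set0].

Definition eta_of (R : realFieldType) (N : finType) (pa : {ffun N -> {set N}})
  : {ffun Ups N -> R} := [ffun x => ((val x).2 == pa (val x).1)%:R].

Definition inner (R : realFieldType) (N : finType) (o e : {ffun Ups N -> R}) : R :=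
  \sum_x o x * e x.

Definition in_PN (R : realFieldType) (N : finType) (e : {ffun Ups N -> R}) : Prop :=
  exists lam : {ffun dag N -> R},
    [/\ forall G, 0 <= lam G, \sum_G lam G = 1 &
        forall x, e x = \sum_G lam G * eta_of R (val G) x].

Definition valid (R : realFieldType) (N : finType) (o : {ffun Ups N -> R}) (u : R) :=
  forall e, in_PN e -> inner o e <= u.

Definition in_face (R : realFieldType) (N : finType) (o : {ffun Ups N -> R}) (u : R)
  (e : {ffun Ups N -> R}) : Prop := in_PN e /\ inner o e = u.

Definition aff_indep (R : realFieldType) (N : finType) (k : nat)
  (p : 'I_k -> {ffun Ups N -> R}) : Prop :=
  forall lam : 'I_k -> R, \sum_i lam i = 0 -> (forall x, \sum_i lam i * p i x = 0) ->
    forall i, lam i = 0.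

(* facet-defining: valid, and the face has affine dimension |Upsilon| - 1
   (= dim P_N - 1): it contains |Upsilon| affinely independent points but
   not |Upsilon|+1 of them. *)
Definition facet (R : realFieldType) (N : finType) (o : {ffun Ups N -> R}) (u : R) :=
  [/\ valid o u,
      (exists p : 'I_#|{: Ups N}| -> {ffun Ups N -> R},
          aff_indep p /\ forall i, in_face o u (p i)) &
      ~ (exists p : 'I_(#|{: Ups N}|).+1 -> {ffun Ups N -> R},
          aff_indep p /\ forall i, in_face o u (p i))].

(* o(a|B), meaningful when (a|B) \in Upsilon (0 otherwise) *)
Definition ocoord (R : realFieldType) (N : finType) (o : {ffun Ups N -> R})
  (a : N) (B : {set N}) : R :=
  if insub (a, B) is Some x then o x else 0.

Definition unitvec (R : realFieldType) (N : finType) (x : Ups N) : {ffun Ups N -> R} :=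
  [ffun y => (y == x)%:R].

(* Main.v *)
Require Import Defs.
From HB Require Import structures.
From mathcomp Require Import all_boot all_order all_algebra ring lra zify.
Import Order.TTheory GRing.Theory Num.Theory.
Local Open Scope ring_scope.
Set Implicit Arguments. Unset Strict Implicit.
Lemma core_dim (R : realFieldType) (T : finType) (P : {set T}) (k : nat)
  (f : 'I_k -> T -> R) :
  (forall lam : 'I_k -> R, (forall j, j \in P -> \sum_i lam i * f i j = 0) ->
     forall i, lam i = 0) -> (k <= #|P|)%N.
Proof.
move=> H; rewrite leqNgt; apply/negP => hlt.
pose M : 'M[R]_(k, #|P|) := \matrix_(i, j) f i (enum_val j).
have hr : (0 < \rank (kermx M))%N.
  by rewrite mxrank_ker subn_gt0 (leq_ltn_trans (rank_leq_col M) hlt).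
have hK : kermx M != 0 by rewrite -mxrank_eq0 -lt0n.
have : ~~ [forall i, forall j, kermx M i j == 0].
  apply: contra hK => /forallP h; apply/eqP/matrixP => i j.
  by move/forallP: (h i) => /(_ j) /eqP ->; rewrite mxE.
rewrite negb_forall => /existsP[i]; rewrite negb_forall => /existsP[j hij].
pose v := row i (kermx M).
have hv : v *m M = 0 by apply/eqP; rewrite -sub_kermx row_sub.
have h0 : forall i', v 0 i' = 0.
  apply: H => z zP.
  have := congr1 (fun A : 'rV[R]_#|P| => A 0 (enum_rank_in zP z)) hv.
  rewrite !mxE => e; apply: etrans e; apply: eq_bigr => i' _.
  by rewrite [M _ _]mxE enum_rankK_in.
by move: (h0 j); rewrite /v mxE => e; rewrite e eqxx in hij.
Qed.
Section Dim.
Variables (R : realFieldType) (N : finType).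
Implicit Types (o e : {ffun Ups N -> R}).

Lemma dimL (k : nat) (D : {set Ups N}) (p : 'I_k -> {ffun Ups N -> R}) :
  aff_indep p -> (forall i z, z \notin D -> p i z = 0) -> (k <= #|D|.+1)%N.
Proof.
move=> hp hz.
have -> : #|D|.+1 = #|None |: [set Some z | z in D]|.
  rewrite cardsU1 card_imset; last exact: Some_inj.
  suff -> : None \notin [set Some z | z in D] by [].
  by apply/imsetP => -[].
apply: (@core_dim R _ _ k (fun i t => if t is Some z then p i z else 1)) => lam hl.
apply: hp.
  rewrite -[RHS](hl None) ?setU11 //; by apply: eq_bigr => i _; rewrite mulr1.
move=> x; case: (boolP (x \in D)) => xD.
  have := hl (Some x); apply.
  by rewrite setU1r //; apply/imsetP; exists x.
by apply: big1 => i _; rewrite hz ?mulr0.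
Qed.

Lemma dimL2 (k : nat) (D : {set Ups N}) (p : 'I_k -> {ffun Ups N -> R}) o u :
  u != 0 -> aff_indep p -> (forall i z, z \notin D -> p i z = 0) ->
  (forall i, inner o (p i) = u) -> (k <= #|D|)%N.
Proof.
move=> hu hp hz hin.
apply: (@core_dim R _ _ k (fun i z => p i z)) => lam hl.
have hall : forall x, \sum_i lam i * p i x = 0.
  move=> x; case: (boolP (x \in D)) => xD; first exact: hl.
  by apply: big1 => i _; rewrite hz ?mulr0.
apply: hp => //.
have : u * \sum_i lam i = 0.
  rewrite mulr_sumr.
  transitivity (\sum_i lam i * inner o (p i)).
    by apply: eq_bigr => i _; rewrite hin mulrC.
  rewrite /inner.
  transitivity (\sum_i \sum_x o x * (lam i * p i x)).
    apply: eq_bigr => i _; rewrite mulr_sumr; apply: eq_bigr => x _.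
    by rewrite mulrCA.
  rewrite exchange_big /=; apply: big1 => x _.
  by rewrite -mulr_sumr hall mulr0.
by move/eqP; rewrite mulf_eq0 (negbTE hu) /= => /eqP.
Qed.
End Dim.
Section Graphs.
Variables (R : realFieldType) (N : finType).
Implicit Types (o e : {ffun Ups N -> R}).

Lemma eta0 x : eta_of R (empty_pa N) x = 0.
Proof.
rewrite !ffunE; case: x => [[a B] /= /andP[hB _]].
by rewrite (negbTE hB).
Qed.

Lemma sub_dag (pa pa' : {ffun N -> {set N}}) :
  is_dag pa -> (forall b, pa' b \subset pa b) -> is_dag pa'.
Proof.
move=> /forallP h hs; apply/forallP => x; apply/forallP => y; apply/implyP => hxy.
have hxy' : Defs.arc pa x y by rewrite /Defs.arc (subsetP (hs y)).
move/forallP: (h x) => /(_ y) /implyP /(_ hxy'); apply: contra.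
apply: connect_sub => z w hzw; apply: connect1.
by rewrite /Defs.arc (subsetP (hs w)).
Qed.

Lemma empty_is_dag : is_dag (empty_pa N).
Proof.
apply/forallP => x; apply/forallP => y; apply/implyP.
by rewrite /Defs.arc /empty_pa ffunE inE.
Qed.

Definition single_pa (a : N) (B : {set N}) : {ffun N -> {set N}} :=
  [ffun b => if b == a then B else set0].

Lemma single_is_dag a (B : {set N}) : a \notin B -> is_dag (single_pa a B).
Proof.
move=> aB; apply/forallP => x; apply/forallP => y; apply/implyP.
rewrite /Defs.arc /single_pa ffunE; case: eqP => [->{y} xB|]; last by rewrite inE.
apply/negP => /connectP[[|z q] /= hq hl].
  by move: xB; rewrite hl (negbTE aB).
move: hq => /andP[]; rewrite /Defs.arc ffunE; case: eqP => _.
  by rewrite (negbTE aB).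
by rewrite inE.
Qed.

Lemma eta_single (y : Ups N) :
  eta_of R (single_pa (val y).1 (val y).2) = unitvec R y.
Proof.
apply/ffunP => z; rewrite !ffunE; congr ((nat_of_bool _)%:R).
apply/idP/idP; last by move=> /eqP ->; rewrite eqxx.
move=> /eqP.
case: ifP => [/eqP e1 e2|_ e2].
  by apply/eqP; apply: val_inj; rewrite [LHS]surjective_pairing e1 e2 -surjective_pairing.
by move: (valP z); rewrite /Ups_pred e2 eqxx.
Qed.

Lemma in_PN_pa (pa : {ffun N -> {set N}}) (hpa : is_dag pa) :
  in_PN (eta_of R pa).
Proof.
pose G : dag N := exist _ pa hpa.
exists [ffun G' => (G' == G)%:R]; split.
- by move=> G'; rewrite ffunE ler0n.
- by rewrite (bigD1 G) //= ffunE eqxx big1 ?addr0 // => G' /negbTE h; rewrite ffunE h.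
- move=> x; rewrite (bigD1 G) //= !ffunE eqxx mul1r big1 ?addr0 //.
  by move=> G' /negbTE h; rewrite !ffunE h mul0r.
Qed.

Lemma in_PN_dag (G : dag N) : in_PN (eta_of R (val G)).
Proof. exact: in_PN_pa (valP G). Qed.

Lemma in_PN0 : in_PN (0 : {ffun Ups N -> R}).
Proof.
have -> : (0 : {ffun Ups N -> R}) = eta_of R (empty_pa N).
  by apply/ffunP => x; rewrite eta0 ffunE.
exact: in_PN_pa empty_is_dag.
Qed.

Lemma in_PN_unit (y : Ups N) : in_PN (unitvec R y).
Proof.
rewrite -eta_single; apply: in_PN_pa; apply: single_is_dag.
by case: y => [[a B] /= /andP[]].
Qed.

Lemma PN_ge0 e x : in_PN e -> 0 <= e x.
Proof.
case=> lam [h0 _ ->]; apply: sumr_ge0 => G _.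
by rewrite mulr_ge0 // ffunE ler0n.
Qed.

Lemma ocoord_sum o a A : ocoord o a A = \sum_y o y * (val y == (a, A))%:R.
Proof.
rewrite /ocoord; case: insubP => [y hP hy|hP].
  rewrite (bigD1 y) //= hy eqxx mulr1 big1 ?addr0 // => z hz.
  case: eqP => [hz'|]; last by rewrite mulr0.
  by move: hz; rewrite (_ : z = y) ?eqxx //; apply: val_inj; rewrite hy; exact: hz'.
apply/esym/big1 => z _; case: eqP => [hz|]; last by rewrite mulr0.
by move: hP; rewrite -hz (valP z).
Qed.

Lemma inner_mod o (pa : {ffun N -> {set N}}) a A :
  inner o (eta_of R [ffun b => if b == a then A else pa b]) =
  inner o (eta_of R pa) - ocoord o a (pa a) + ocoord o a A.
Proof.
rewrite !ocoord_sum /inner -sumrB -big_split /=; apply: eq_bigr => y _.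
rewrite !ffunE; have -> : sval y = val y by [].
move: (val y) => [b C]; rewrite !xpair_eqE /=.
by case: ifP => [/eqP -> | ba] /=; ring.
Qed.

Lemma inner0 o : inner o 0 = 0.
Proof. by apply: big1 => x _; rewrite ffunE mulr0. Qed.

End Graphs.
Section Main.
Variables (R : realFieldType) (N : finType).
Implicit Types (o e : {ffun Ups N -> R}).

Lemma eta_empty : eta_of R (empty_pa N) = 0.
Proof. by apply/ffunP => x; rewrite eta0 ffunE. Qed.

Lemma inner_unit o y : inner o (unitvec R y) = o y.
Proof.
rewrite /inner (bigD1 y) //= ffunE eqxx mulr1 big1 ?addr0 //.
by move=> z /negbTE h; rewrite ffunE h mulr0.
Qed.

Lemma inner_conv o e (lam : {ffun dag N -> R}) :
  (forall x, e x = \sum_G lam G * eta_of R (val G) x) ->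
  inner o e = \sum_G lam G * inner o (eta_of R (val G)).
Proof.
move=> he; rewrite /inner.
under eq_bigr => x _ do rewrite he mulr_sumr.
rewrite exchange_big /=; apply: eq_bigr => G _.
rewrite mulr_sumr; apply: eq_bigr => x _; ring.
Qed.

Lemma face_zero o u e (x0 : Ups N) : valid o u -> in_face o u e ->
  (forall G : dag N, inner o (eta_of R (val G)) = u -> eta_of R (val G) x0 = 0) ->
  e x0 = 0.
Proof.
move=> hv [[lam [hl0 hl1 he]] hin] hG.
have hle : forall G : dag N, inner o (eta_of R (val G)) <= u.
  by move=> G; apply: hv; apply: in_PN_dag.
have hsum : \sum_G lam G * (u - inner o (eta_of R (val G))) = 0.
  have -> : \sum_G lam G * (u - inner o (eta_of R (val G))) =
     u * \sum_G lam G - \sum_G lam G * inner o (eta_of R (val G)).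
    rewrite mulr_sumr -sumrB; apply: eq_bigr => G _; ring.
  by rewrite hl1 mulr1 -{1}hin (inner_conv o he) subrr.
have h0 : forall G, lam G * (u - inner o (eta_of R (val G))) = 0.
  move=> G; apply: (psumr_eq0P _ hsum) => // G' _.
  by rewrite mulr_ge0 // subr_ge0.
rewrite he; apply: big1 => G _.
move/eqP: (h0 G); rewrite mulf_eq0 => /orP[/eqP ->|]; first by rewrite mul0r.
by rewrite subr_eq0 => /eqP/esym/hG ->; rewrite mulr0.
Qed.

End Main.
Section Main2.
Variables (R : realFieldType) (N : finType).
Implicit Types (o e : {ffun Ups N -> R}).

Lemma card_Ups_gt0 (x : Ups N) : (0 < #|{: Ups N}|)%N.
Proof. by apply/card_gt0P; exists x. Qed.

Lemma key_contra o u (x0 : Ups N) : facet o u -> u != 0 ->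
  (forall G : dag N, inner o (eta_of R (val G)) = u -> eta_of R (val G) x0 = 0) ->
  False.
Proof.
move=> [hv [p [hp hf]] _] hu hG.
have := dimL2 (D := [set~ x0]) hu hp _ (fun i => (hf i).2).
rewrite cardsC1 => /(_ _) h.
have hgt := card_Ups_gt0 x0.
suff : (#|{: Ups N}| <= #|{: Ups N}|.-1)%N by lia.
apply: h => i z; rewrite in_setC1 negbK => /eqP ->.
exact: face_zero hv (hf i) hG.
Qed.

Lemma ocoord_mono o u (a : N) (A B : {set N}) : facet o u -> 0 < u ->
  B != set0 -> a \notin B -> A \subset B -> ocoord o a A <= ocoord o a B.
Proof.
move=> hfac hu hB haB hAB; rewrite leNgt; apply/negP => hlt.
have hx : Ups_pred (a, B) by rewrite /Ups_pred /= hB haB.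
pose x0 : Ups N := exist _ (a, B) hx.
apply: (key_contra (x0 := x0) hfac); first by rewrite gt_eqF.
move=> [pa hpa] /= hin; rewrite ffunE /=.
case: eqP => [e|]; last by [].
exfalso.
pose pa' : {ffun N -> {set N}} := [ffun b => if b == a then A else pa b].
have hpa' : is_dag pa'.
  apply: (sub_dag (pa := pa) hpa) => b; rewrite /pa' ffunE; case: eqP => [->|_] //.
  by rewrite -e.
have [hv _ _] := hfac.
have := hv _ (in_PN_pa R hpa').
rewrite /pa' inner_mod hin -e => h.
move: hlt h; lra.
Qed.

Lemma ocoord0 o a : ocoord o a set0 = 0.
Proof. by rewrite /ocoord insubF // /Ups_pred /= eqxx. Qed.
End Main2.
Section Main3.
Variables (R : realFieldType) (N : finType).
Implicit Types (o e : {ffun Ups N -> R}).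

Lemma part_i o u : valid o u ->
  [/\ 0 <= u, (u = 0 <-> in_face o u (eta_of R (empty_pa N))) &
      (u = 0 -> forall x : Ups N, o x <= 0)].
Proof.
move=> hv; have h0 := hv _ (in_PN0 R N); rewrite inner0 in h0.
split => //.
  rewrite eta_empty; split => [->|[_]]; last by rewrite inner0.
  by split; [exact: in_PN0 | exact: inner0].
by move=> hu x; rewrite -hu -(inner_unit o x); apply: hv; apply: in_PN_unit.
Qed.

Lemma zero_coords o e : (forall x, o x <= 0) -> in_PN e -> inner o e = 0 ->
  forall z, o z != 0 -> e z = 0.
Proof.
move=> ho he hin z hz.
have hs : \sum_x - (o x * e x) = 0 by rewrite sumrN -/(inner o e) hin oppr0.
have h0 : forall x, true -> 0 <= - (o x * e x).
  by move=> x _; rewrite oppr_ge0 mulr_le0_ge0 //; exact: PN_ge0.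
have /eqP := @psumr_eq0P _ _ _ _ h0 hs z isT.
by rewrite oppr_eq0 mulf_eq0 (negbTE hz) => /eqP.
Qed.
End Main3.
Section Main4.
Variables (R : realFieldType) (N : finType).
Implicit Types (o e : {ffun Ups N -> R}).

Lemma ev_eq (i j : 'I_#|{: Ups N}|) : (enum_val i == enum_val j) = (i == j).
Proof. exact: (inj_eq enum_val_inj). Qed.

Definition allpts (i : 'I_(#|{: Ups N}|).+1) : {ffun Ups N -> R} :=
  if unlift ord0 i is Some j then unitvec R (enum_val j) else 0.

Lemma allpts_in i : in_PN (allpts i).
Proof.
rewrite /allpts; case: unlift => [j|]; [exact: in_PN_unit | exact: in_PN0].
Qed.

Lemma allpts_indep : aff_indep allpts.
Proof.
move=> lam hsum hx.
have hl : forall j, lam (lift ord0 j) = 0.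
  move=> j; rewrite -(hx (enum_val j)) big_ord_recl /allpts unlift_none ffunE mulr0 add0r.
  rewrite (bigD1 j) //= liftK ffunE eqxx mulr1 big1 ?addr0 // => i hij.
  by rewrite liftK ffunE ev_eq eq_sym (negbTE hij) mulr0.
have h0 : lam ord0 = 0.
  by move: hsum; rewrite big_ord_recl big1 ?addr0 // => i _; rewrite hl.
by move=> i; case: (unliftP ord0 i) => [j ->|->].
Qed.

Lemma facepts_indep (x : Ups N) :
  aff_indep (fun j : 'I_#|{: Ups N}| =>
    if enum_val j == x then 0 else unitvec R (enum_val j)).
Proof.
move=> lam hsum hx.
have hl : forall j, enum_val j != x -> lam j = 0.
  move=> j hj; rewrite -(hx (enum_val j)) (bigD1 j) //= (negbTE hj) ffunE eqxx mulr1.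
  rewrite big1 ?addr0 // => i hij; case: ifP => _; first by rewrite ffunE mulr0.
  by rewrite ffunE ev_eq eq_sym (negbTE hij) mulr0.
have h0 : lam (enum_rank x) = 0.
  move: hsum; rewrite (bigD1 (enum_rank x)) //= big1 ?addr0 // => i hi.
  apply: hl; apply: contra hi => /eqP <-; by rewrite enum_valK.
move=> i; case: (eqVneq (enum_val i) x) => [e|]; last exact: hl.
by rewrite -(enum_valK i) e.
Qed.

End Main4.
Section Main5.
Variables (R : realFieldType) (N : finType).
Implicit Types (o e : {ffun Ups N -> R}).

Lemma inner_neg o c x e : (forall y, o y = - (c * unitvec R x y)) ->
  inner o e = - (c * e x).
Proof.
move=> ho; rewrite /inner (bigD1 x) //= ho ffunE eqxx mulr1 big1 ?addr0.
  by rewrite mulNr.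
by move=> y hy; rewrite ho ffunE (negbTE hy) mulr0 oppr0 mul0r.
Qed.

Lemma iii_bwd o c x : 0 < c -> (forall y, o y = - (c * unitvec R x y)) ->
  facet o 0 /\ in_face o 0 (eta_of R (empty_pa N)).
Proof.
move=> hc ho.
have hv : valid o 0.
  move=> e he; rewrite (inner_neg _ ho) oppr_le0; apply: mulr_ge0; [exact: ltW | exact: PN_ge0].
have hface : forall e, in_face o 0 e -> e x = 0.
  move=> e [_]; rewrite (inner_neg _ ho) => /eqP; rewrite oppr_eq0 mulf_eq0.
  by rewrite (gt_eqF hc) => /eqP.
split; last first.
  by rewrite eta_empty; split; [exact: in_PN0 | exact: inner0].
split => //.
  exists (fun j => if enum_val j == x then 0 else unitvec R (enum_val j)).
  split; first exact: facepts_indep.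
  move=> j; case: ifP => hj.
    by split; [exact: in_PN0 | exact: inner0].
  split; first exact: in_PN_unit.
  by rewrite (inner_neg _ ho) ffunE eq_sym hj mulr0 oppr0.
move=> [p [hp hf]].
have := dimL (D := [set~ x]) hp.
rewrite cardsC1 => /(_ _) h.
have hgt := card_Ups_gt0 x.
suff : (#|{: Ups N}|.+1 <= #|{: Ups N}|.-1.+1)%N by lia.
apply: h => i z; rewrite in_setC1 negbK => /eqP ->.
exact: hface.
Qed.

Lemma iii_fwd o u : facet o u -> in_face o u (eta_of R (empty_pa N)) ->
  exists c : R, 0 < c /\ exists x : Ups N,
    (forall y, o y = - (c * unitvec R x y)) /\ u = c * 0.
Proof.
move=> hfac [_ hin].
have hu : u = 0 by rewrite -hin eta_empty inner0.
rewrite hu in hfac *; have [hv h2 h3] := hfac.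
have [_ _ hneg] := part_i hv.
have ho := hneg erefl.
case: (boolP [exists x, o x != 0]) => [/existsP[x1 hx1]|hall]; last first.
  exfalso; apply: h3; exists (@allpts R N); split; first exact: allpts_indep.
  move=> i; split; first exact: allpts_in.
  apply: big1 => y _.
  have : ~~ (o y != 0) by move: hall; rewrite negb_exists => /forallP.
  by rewrite negbK => /eqP ->; rewrite mul0r.
have hlt : o x1 < 0 by rewrite lt_neqAle hx1 ho.
have hz : forall y, y != x1 -> o y = 0.
  move=> y hy; case: (eqVneq (o y) 0) => // hoy; exfalso.
  case: h2 => p [hp hf].
  have := dimL (D := ~: [set x1; y]) hp.
  have hc : (2 + #|~: [set x1; y]| = #|{: Ups N}|)%N.
    by rewrite -(cardsC [set x1; y]) cards2 eq_sym hy.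
  move=> /(_ _) h.
  suff : (#|{: Ups N}| <= #|~: [set x1; y]|.+1)%N by lia.
  apply: h => i z; rewrite in_setC negbK in_set2 => /orP[] /eqP ->.
    exact: (zero_coords ho (hf i).1 (hf i).2 hx1).
  exact: (zero_coords ho (hf i).1 (hf i).2 hoy).
exists (- o x1); split; first by rewrite oppr_gt0.
exists x1; split; last by rewrite mulr0.
move=> y; rewrite ffunE; case: (eqVneq y x1) => [->|hy].
  by rewrite mulr1 opprK.
by rewrite hz // mulr0 oppr0.
Qed.

End Main5.

Unset Implicit Arguments.
Set Strict Implicit.

Theorem lemma2 (R : realFieldType) (N : finType) (hN : (2 <= #|N|)%N) :
  (forall (o : {ffun Ups N -> R}) (u : R), valid o u ->
     [/\ 0 <= u,
         (u = 0 <-> in_face o u (eta_of R (empty_pa N))),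
         (u = 0 -> forall x : Ups N, o x <= 0) &
         (facet o u -> 0 < u ->
            forall (a : N) (A B : {set N}), A != set0 -> A \subset B -> a \notin B ->
              ocoord o a A <= ocoord o a B /\ 0 <= ocoord o a A)])
  /\
  (forall (o : {ffun Ups N -> R}) (u : R),
     (facet o u /\ in_face o u (eta_of R (empty_pa N))) <->
     (exists c : R, 0 < c /\ exists x : Ups N, (forall y, o y = - (c * unitvec R x y)) /\ u = c * 0)).
Proof.
split.
  move=> o u hv; have [h1 h2 h3] := part_i hv; split => // hfac hu a A B hA hAB haB.
  have hB : B != set0.
    by apply: contra hA => /eqP hB; rewrite -subset0 -hB.
  split; first exact: ocoord_mono hfac hu hB haB hAB.
  rewrite -(ocoord0 o a); apply: ocoord_mono hfac hu hA _ (sub0set _).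
  by apply: contra haB; apply: (subsetP hAB).
move=> o u; split; first by case; apply: iii_fwd.
move=> [c [hc [x [ho ->]]]]; rewrite mulr0; exact: iii_bwd hc ho.
Qed.
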